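(* Let $m\ge 2$ candidates and $n$ voters be given, let $2\le\ell\le m$, and run the randomized Minimax algorithm described in the context. For each candidate $c$, let $c_{\min}\in\arg\min_{c'\neq c}\mathrm{sc}_{\mathrm{MM}}(c,c')$. Then for every $\epsilon\in(0,1]$, the probability that the normalized score $\mathrm{S}[c]$ computed by the algorithm for $c$ differs from the true Minimax score $\mathrm{sc}_{\mathrm{MM}}(c)$ by a multiplicative factor of at least $1\pm\epsilon$ (i.e. $\mathrm{S}[c]<(1-\epsilon)\mathrm{sc}_{\mathrm{MM}}(c)$ or $\mathrm{S}[c]>(1+\epsilon)\mathrm{sc}_{\mathrm{MM}}(c)$) is at most $$m\exp\!\left(-\frac{\epsilon^2\ell^2\,\mathrm{sc}_{\mathrm{MM}}(c,c_{\min})}{6m^2}\right).$$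
   Context: An election consists of a set $V$ of $n$ voters and a set $C$ of $m$ candidates; each voter $v$ has a strict linear order $\succ_v$ over $C$. For $c,c'\in C$, $\mathrm{sc}_{\mathrm{MM}}(c,c')=|\{v\in V: c\succ_v c'\}|$, and the Minimax score is $\mathrm{sc}_{\mathrm{MM}}(c)=\min_{c'\neq c}\mathrm{sc}_{\mathrm{MM}}(c,c')$; the Minimax rule selects the candidates with maximal Minimax score. Randomized Minimax algorithm: set $\mathrm{S}[c,c']=0$ for all $c,c'$. Independently for each voter $v$, choose a uniformly random $S_v\subseteq C$ with $|S_v|=\ell$ and ask $v$ to rank $S_v$; for every ordered pair of distinct $c,c'\in S_v$ with $c\succ_v c'$, increase $\mathrm{S}[c,c']$ by 1. Then for each $c$ set $\mathrm{S}[c]=n\cdot\min\{\mathrm{S}[c,c']/(\mathrm{S}[c,c']+\mathrm{S}[c',c]) : c'\neq c,\ \mathrm{S}[c,c']+\mathrm{S}[c',c]>0\}$, and return a candidate with maximal $\mathrm{S}[c]$. *)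

(* Defs.v *)
From Stdlib Require Import Reals.
From mathcomp Require Import all_boot.
Set Implicit Arguments. Unset Strict Implicit. Unset Printing Implicit Defensive.

Section Minimax.
Local Open Scope R_scope.
Variables (C : finType) (n : nat) (pref : 'I_n -> rel C).

(* pref v c c' means  c >_v c'. A strict linear order. *)
Definition strict_linear_order (r : rel C) : Prop :=
  irreflexive r /\ transitive r /\ (forall x y, x != y -> r x y || r y x).

Definition scMM2 (c c' : C) : nat := #|[set v : 'I_n | pref v c c']|.

(* sc_MM(c) = min_{c' <> c} sc_MM(c,c'); n is a harmless identity since
   every sc_MM(c,c') <= n and the range is nonempty when |C| >= 2. *)
Definition scMM (c : C) : nat := \big[minn/n]_(c' | c' != c) scMM2 c c'.

(* Outcome of the random queries: for each voter v the asked subset S_v. *)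
Definition outcome := {ffun 'I_n -> {set C}}.

Definition Omega (l : nat) : {set outcome} := [set w : outcome | [forall v, #|w v| == l]].

Definition Sc2 (w : outcome) (c c' : C) : nat :=
  #|[set v : 'I_n | [&& c \in w v, c' \in w v & pref v c c']]|.

(* min { S[c,c'] / (S[c,c'] + S[c',c]) : c' <> c, denominator > 0 };
   None encodes the minimum over the empty set (= +infinity). *)
Definition Smin (w : outcome) (c : C) : option R :=
  foldr (fun c' acc =>
           if (c' != c) && (0 < Sc2 w c c' + Sc2 w c' c)%N then
             let r := (INR (Sc2 w c c') / INR (Sc2 w c c' + Sc2 w c' c)) in
             Some (match acc with None => r | Some a => Rmin r a end)
           else acc) None (enum C).

Definition Sc (w : outcome) (c : C) : option R :=
  option_map (fun x => (INR n * x)) (Smin w c).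

Definition deviates (eps : R) (w : outcome) (c : C) : bool :=
  match Sc w c with
  | None => true
  | Some s =>
      (if Rlt_dec s ((1 - eps) * INR (scMM c)) then true else false)
      || (if Rlt_dec ((1 + eps) * INR (scMM c)) s then true else false)
  end.

Definition prob_deviates (l : nat) (eps : R) (c : C) : R :=
  (INR #|[set w in Omega l | deviates eps w c]| / INR #|Omega l|).

End Minimax.

(* Main.v *)
Require Import Defs.
From Stdlib Require Import Reals Lra Psatz.
From Coquelicot Require Import Coquelicot.
Open Scope R_scope.

Lemma mono_up (f f' : R -> R) a b : a <= b ->
  (forall c, is_derive f c (f' c)) -> (forall c, a <= c <= b -> 0 <= f' c) -> f a <= f b.
Proof.
intros Hab Hd Hp. destruct (Req_dec a b) as [->|Hne]; [lra|].
destruct (MVT_cor2 f f' a b) as [c [Hc1 Hc2]]; [lra| |].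
- intros c _; apply is_derive_Reals, Hd.
- assert (0 <= f' c) by (apply Hp; lra). nra.
Qed.

Lemma exp_le3 t : t <= 1 -> exp t <= 3.
Proof. intros. pose proof exp_le_3. destruct (Req_dec t 1) as [->|]; [lra|].
 pose proof (exp_increasing t 1). lra. Qed.

Lemma exp_ub1 t : 0 <= t <= 1 -> exp t <= 1 + 3*t.
Proof. intros H.
 pose proof (mono_up (fun x => 1 + 3*x - exp x) (fun x => 3 - exp x) 0 t).
 cbv beta in H0; rewrite exp_0 in H0.
 assert (1 + 3 * 0 - 1 <= 1 + 3 * t - exp t); [|lra].
 apply H0; [lra| |].
 - intros c; auto_derive; [easy| ring].
 - intros c Hc; pose proof (exp_le3 c); lra.
Qed.

Lemma exp_ub2 t : 0 <= t <= 1 -> exp t <= 1 + t + 3*t^2/2.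
Proof. intros H.
 pose proof (mono_up (fun x => 1 + x + 3*x^2/2 - exp x) (fun x => 1 + 3*x - exp x) 0 t).
 cbv beta in H0; rewrite exp_0 in H0.
 assert (1 + 0 + 3*0^2/2 - 1 <= 1 + t + 3*t^2/2 - exp t); [|lra].
 apply H0; [lra| |].
 - intros c; auto_derive; [easy| field].
 - intros c Hc; pose proof (exp_ub1 c); lra.
Qed.

Lemma exp_ub3 t : 0 <= t <= 1 -> exp t <= 1 + t + t^2/2 + t^3/2.
Proof. intros H.
 pose proof (mono_up (fun x => 1 + x + x^2/2 + x^3/2 - exp x) (fun x => 1 + x + 3*x^2/2 - exp x) 0 t).
 cbv beta in H0; rewrite exp_0 in H0.
 assert (1 + 0 + 0^2/2 + 0^3/2 - 1 <= 1 + t + t^2/2 + t^3/2 - exp t); [|lra].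
 apply H0; [lra| |].
 - intros c; auto_derive; [easy| field].
 - intros c Hc; pose proof (exp_ub2 c); lra.
Qed.

Lemma exp_ub4 t : 0 <= t <= 1 -> exp t <= 1 + t + t^2/2 + t^3/6 + t^4/8.
Proof. intros H.
 pose proof (mono_up (fun x => 1 + x + x^2/2 + x^3/6 + x^4/8 - exp x) (fun x => 1 + x + x^2/2 + x^3/2 - exp x) 0 t).
 cbv beta in H0; rewrite exp_0 in H0.
 assert (1 + 0 + 0^2/2 + 0^3/6 + 0^4/8 - 1 <= 1 + t + t^2/2 + t^3/6 + t^4/8 - exp t); [|lra].
 apply H0; [lra| |].
 - intros c; auto_derive; [easy| field].
 - intros c Hc; pose proof (exp_ub3 c); lra.
Qed.

Lemma mono_down (f f' : R -> R) a b : a <= b ->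
  (forall c, is_derive f c (f' c)) -> (forall c, a <= c <= b -> f' c <= 0) -> f b <= f a.
Proof.
intros Hab Hd Hp.
pose proof (mono_up (fun x => - f x) (fun x => - f' x) a b Hab).
assert (- f a <= - f b); [|lra]. apply H.
- intros c; apply (is_derive_opp f); apply Hd.
- intros c Hc; specialize (Hp c Hc); lra.
Qed.

Lemma exp_n2 t : t <= 0 -> exp t <= 1 + t + t^2/2.
Proof. intros H.
 pose proof (mono_down (fun x => 1 + x + x^2/2 - exp x) (fun x => 1 + x - exp x) t 0 H).
 cbv beta in H0; rewrite exp_0 in H0.
 assert (1 + 0 + 0^2/2 - 1 <= 1 + t + t^2/2 - exp t); [|lra].
 apply H0.
 - intros c; auto_derive; [easy| field].
 - intros c Hc; pose proof (exp_ineq1_le c); lra.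
Qed.

Lemma exp_n3 t : t <= 0 -> 1 + t + t^2/2 + t^3/6 <= exp t.
Proof. intros H.
 pose proof (mono_down (fun x => exp x - (1 + x + x^2/2 + x^3/6)) (fun x => exp x - (1 + x + x^2/2)) t 0 H).
 cbv beta in H0; rewrite exp_0 in H0.
 assert (1 - (1 + 0 + 0^2/2 + 0^3/6) <= exp t - (1 + t + t^2/2 + t^3/6)); [|lra].
 apply H0.
 - intros c; auto_derive; [easy| field].
 - intros c Hc; pose proof (exp_n2 c); lra.
Qed.

Lemma exp_n4 t : t <= 0 -> exp t <= 1 + t + t^2/2 + t^3/6 + t^4/24.
Proof. intros H.
 pose proof (mono_down (fun x => 1 + x + x^2/2 + x^3/6 + x^4/24 - exp x) (fun x => 1 + x + x^2/2 + x^3/6 - exp x) t 0 H).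
 cbv beta in H0; rewrite exp_0 in H0.
 assert (1 + 0 + 0^2/2 + 0^3/6 + 0^4/24 - 1 <= 1 + t + t^2/2 + t^3/6 + t^4/24 - exp t); [|lra].
 apply H0.
 - intros c; auto_derive; [easy| field].
 - intros c Hc; pose proof (exp_n3 c); lra.
Qed.

Lemma exp_ub t : t <= 1 -> exp t - 1 <= t + t^2/2 + t^3/6 + t^4/8.
Proof. intros H. destruct (Rle_or_lt t 0).
 - pose proof (exp_n4 t H0). assert (0 <= t^4) by (replace (t^4) with ((t^2)^2) by ring; apply pow2_ge_0). lra.
 - pose proof (exp_ub4 t). lra.
Qed.
Definition E1 (t : R) := t + t^2/2 + t^3/6 + t^4/8.

Lemma polyU (al be e : R) : 0 <= al -> 0 <= be -> al + be = 1 -> 0 < e <= 1 ->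
  al * E1 (2/3*e*(be - e*al)) + be * E1 (-(2/3)*e*(1+e)*al) <= -(e^2*al)/3.
Proof.
intros Ha Hb Hs He. unfold E1.
set (p := be - e*al). set (t1 := 2/3*e*p). set (t2 := -(2/3)*e*(1+e)*al).
assert (Hp : -1 <= p <= 1) by (unfold p; split; nra).
assert (Ht1 : t1 <= 2/3) by (unfold t1; try split; nra).
assert (Ht1s : t1^2 <= 4/9).
{ assert (p^2 <= 1) by nra. assert (e^2 <= 1) by nra. assert (0 <= p^2) by nra.
  replace (t1^2) with (4/9*(e^2*p^2)). 2:{ unfold t1. field. }
  assert (e^2*p^2 <= 1*1) by (apply Rmult_le_compat; nra). lra. }
assert (A1 : t1^3 <= 2/3*t1^2) by (replace (t1^3) with (t1^2*t1) by field; nra).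
assert (A2 : t1^4 <= 4/9*t1^2) by (replace (t1^4) with (t1^2*t1^2) by field; nra).
assert (Ht2 : -(4/3) <= t2 <= 0) by (unfold t2; split; nra).
assert (B : t2^3/6 + t2^4/8 <= 0).
{ replace (t2^3/6 + t2^4/8) with (t2^2 * (t2 * (1/6 + t2/8))) by field.
  assert (0 <= t2^2) by nra. assert (t2 * (1/6 + t2/8) <= 0) by nra. nra. }
assert (Lin : al*t1 + be*t2 = -(2/3)*e^2*al).
{ unfold t1, t2, p. replace be with (1 - al) by lra. field. }
assert (Key : p^2 + be*al*(1+e)^2 <= 1).
{ replace (p^2 + be*al*(1+e)^2) with (be*(be+al) + e^2*al*(al+be)) by (unfold p; ring).
  replace (be + al) with 1 by lra. replace (al + be) with 1 by lra.
  assert (e^2 <= 1) by nra. assert (e^2*al <= 1*al) by (apply Rmult_le_compat_r; lra). lra. }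
assert (Q : al*(2/3*t1^2) + be*(t2^2/2) <= 8/27*e^2*al).
{ replace (al*(2/3*t1^2) + be*(t2^2/2)) with (8/27*e^2*al*(p^2 + 3/4*be*al*(1+e)^2)) by (unfold t1, t2; field).
  assert (0 <= be*al*(1+e)^2) by (apply Rmult_le_pos; nra).
  assert (0 <= e^2*al) by nra. nra. }
assert (al * (t1^3/6 + t1^4/8) <= al * (t1^2/6)) by (apply Rmult_le_compat_l; lra).
assert (be * (t2^3/6 + t2^4/8) <= 0) by nra.
nra.
Qed.

Lemma polyL (al be e : R) : 0 <= al -> 0 <= be -> al + be = 1 -> 0 < e <= 1 ->
  al * E1 (-(2/3)*e*(be + e*al)) + be * E1 (2/3*e*(1-e)*al) <= -(e^2*al)/3.
Proof.
intros Ha Hb Hs He. unfold E1.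
set (s := be + e*al). set (t1 := -(2/3)*e*s). set (t2 := 2/3*e*(1-e)*al).
assert (Hp : 0 <= s <= 1) by (unfold s; split; nra).
assert (Ht1 : -(2/3) <= t1 <= 0) by (unfold t1; try split; nra).
assert (A1 : t1^3 <= 0) by (replace (t1^3) with (t1^2*t1) by field; nra).
assert (A2 : t1^4 <= 4/9*t1^2) by (replace (t1^4) with (t1^2*t1^2) by field; nra).
assert (Ht2 : 0 <= t2 <= 2/3).
{ unfold t2. assert (0 <= e*(1-e)) by nra. assert (e*(1-e) <= 1) by nra. split; nra. }
assert (B1 : t2^3 <= 2/3*t2^2) by (replace (t2^3) with (t2^2*t2) by field; nra).
assert (B2 : t2^4 <= 4/9*t2^2) by (replace (t2^4) with (t2^2*t2^2) by field; nra).
assert (Lin : al*t1 + be*t2 = -(2/3)*e^2*al).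
{ unfold t1, t2, s. replace be with (1 - al) by lra. field. }
assert (Key : s^2 + be*al*(1-e)^2 <= 1).
{ replace (s^2 + be*al*(1-e)^2) with (be*(be+al) + e^2*al*(al+be)) by (unfold s; ring).
  replace (be + al) with 1 by lra. replace (al + be) with 1 by lra.
  assert (e^2 <= 1) by nra. assert (e^2*al <= 1*al) by (apply Rmult_le_compat_r; lra). lra. }
assert (Q : al*(5/9*t1^2) + be*(2/3*t2^2) <= 8/27*e^2*al).
{ replace (al*(5/9*t1^2) + be*(2/3*t2^2)) with (e^2*al*(20/81*s^2 + 8/27*be*al*(1-e)^2)) by (unfold t1, t2; field).
  assert (0 <= be*al*(1-e)^2) by (apply Rmult_le_pos; nra).
  assert (0 <= s^2) by nra.
  assert (0 <= e^2*al) by nra. nra. }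
assert (al * (t1^2/2 + t1^3/6 + t1^4/8) <= al * (5/9*t1^2)) by (apply Rmult_le_compat_l; lra).
assert (be * (t2^2/2 + t2^3/6 + t2^4/8) <= be*(2/3*t2^2)) by (apply Rmult_le_compat_l; lra).
nra.
Qed.

Lemma expE1 t : t <= 1 -> exp t - 1 <= E1 t.
Proof. intros; unfold E1; apply exp_ub; lra. Qed.

Lemma anU a b e : 0 <= a -> 0 <= b -> 0 < e <= 1 -> 0 < a + b ->
  a*(exp((2*e/(3*(a+b)))*(b - e*a)) - 1) + b*(exp((2*e/(3*(a+b)))*(-(1+e)*a)) - 1) <= -(e^2*a)/3.
Proof.
intros Ha Hb He Hab.
set (n := a+b). assert (Hnp : 0 < n) by (unfold n; lra).
set (al := a/n). set (be := b/n).
assert (Ea : a = al*n) by (unfold al; field; lra).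
assert (Eb : b = be*n) by (unfold be; field; lra).
assert (Hal : 0 <= al) by (unfold al; apply Rdiv_le_0_compat; lra).
assert (Hbe : 0 <= be) by (unfold be; apply Rdiv_le_0_compat; lra).
assert (Hs : al + be = 1) by (unfold al, be; field_simplify; [unfold n; field|]; lra).
replace (2*e/(3*n)*(b - e*a)) with (2/3*e*(be - e*al)) by (rewrite Ea, Eb; field; lra).
replace (2*e/(3*n)*(-(1+e)*a)) with (-(2/3)*e*(1+e)*al) by (rewrite Ea; field; lra).
pose proof (@polyU al be e Hal Hbe Hs He).
assert (H1 : exp (2/3*e*(be - e*al)) - 1 <= E1 (2/3*e*(be - e*al))) by (apply expE1; nra).
assert (H2 : exp (-(2/3)*e*(1+e)*al) - 1 <= E1 (-(2/3)*e*(1+e)*al)) by (apply expE1; nra).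
apply Rle_trans with (a * E1 (2/3*e*(be - e*al)) + b * E1 (-(2/3)*e*(1+e)*al)).
{ apply Rplus_le_compat; apply Rmult_le_compat_l; lra. }
rewrite Ea, Eb.
replace (al * n * E1 (2 / 3 * e * (be - e * al)) + be * n * E1 (- (2 / 3) * e * (1 + e) * al))
  with (n * (al * E1 (2 / 3 * e * (be - e * al)) + be * E1 (- (2 / 3) * e * (1 + e) * al))) by ring.
replace (-(e^2*(al*n))/3) with (n * (-(e^2*al)/3)) by field.
apply Rmult_le_compat_l; lra.
Qed.

Lemma anL a b e : 0 <= a -> 0 <= b -> 0 < e <= 1 -> 0 < a + b ->
  a*(exp((2*e/(3*(a+b)))*(-(b + e*a))) - 1) + b*(exp((2*e/(3*(a+b)))*((1-e)*a)) - 1) <= -(e^2*a)/3.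
Proof.
intros Ha Hb He Hab.
set (n := a+b). assert (Hnp : 0 < n) by (unfold n; lra).
set (al := a/n). set (be := b/n).
assert (Ea : a = al*n) by (unfold al; field; lra).
assert (Eb : b = be*n) by (unfold be; field; lra).
assert (Hal : 0 <= al) by (unfold al; apply Rdiv_le_0_compat; lra).
assert (Hbe : 0 <= be) by (unfold be; apply Rdiv_le_0_compat; lra).
assert (Hs : al + be = 1) by (unfold al, be; field_simplify; [unfold n; field|]; lra).
replace (2*e/(3*n)*(-(b + e*a))) with (-(2/3)*e*(be + e*al)) by (rewrite Ea, Eb; field; lra).
replace (2*e/(3*n)*((1-e)*a)) with (2/3*e*(1-e)*al) by (rewrite Ea; field; lra).
pose proof (@polyL al be e Hal Hbe Hs He).
assert (H1 : exp (-(2/3)*e*(be + e*al)) - 1 <= E1 (-(2/3)*e*(be + e*al))) by (apply expE1; nra).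
assert (H2 : exp (2/3*e*(1-e)*al) - 1 <= E1 (2/3*e*(1-e)*al)).
{ apply expE1. assert (0 <= e*(1-e) <= 1) by (split; nra). nra. }
apply Rle_trans with (a * E1 (-(2/3)*e*(be + e*al)) + b * E1 (2/3*e*(1-e)*al)).
{ apply Rplus_le_compat; apply Rmult_le_compat_l; lra. }
rewrite Ea, Eb.
replace (al * n * E1 (-(2/3)*e*(be + e*al)) + be * n * E1 (2/3*e*(1-e)*al))
  with (n * (al * E1 (-(2/3)*e*(be + e*al)) + be * E1 (2/3*e*(1-e)*al))) by ring.
replace (-(e^2*(al*n))/3) with (n * (-(e^2*al)/3)) by field.
apply Rmult_le_compat_l; lra.
Qed.

From HB Require Import structures.
From mathcomp Require Import all_boot.
Set Implicit Arguments. Unset Strict Implicit. Unset Printing Implicit Defensive.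
Open Scope R_scope.
Lemma RplusA' : associative Rplus. Proof. by move=> x y z; rewrite Rplus_assoc. Qed.
Lemma RmultA' : associative Rmult. Proof. by move=> x y z; rewrite Rmult_assoc. Qed.
HB.instance Definition _ := Monoid.isComLaw.Build R 0 Rplus RplusA' Rplus_comm Rplus_0_l.
HB.instance Definition _ := Monoid.isComLaw.Build R 1 Rmult RmultA' Rmult_comm Rmult_1_l.
HB.instance Definition _ := Monoid.isMulLaw.Build R 0 Rmult Rmult_0_l Rmult_0_r.
HB.instance Definition _ := Monoid.isAddLaw.Build R Rmult Rplus Rmult_plus_distr_r Rmult_plus_distr_l.

Notation "\rsum_ ( i 'in' A ) F" := (\big[Rplus/0]_(i in A) F) (at level 41, F at level 41, i, A at level 50).

Lemma Rsum_le (I : finType) (P : pred I) (F G : I -> R) :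
  (forall i, P i -> F i <= G i) ->
  \big[Rplus/0]_(i | P i) F i <= \big[Rplus/0]_(i | P i) G i.
Proof.
move=> H; apply: (big_ind2 (fun x y => x <= y)); [lra| move=> *; lra | exact H].
Qed.

Lemma Rsum_ge0 (I : finType) (P : pred I) (F : I -> R) :
  (forall i, P i -> 0 <= F i) -> 0 <= \big[Rplus/0]_(i | P i) F i.
Proof.
move=> H; apply: (big_ind (fun x => 0 <= x)); [lra| move=> *; lra | exact H].
Qed.

Lemma Rprod_ge0 (I : finType) (P : pred I) (F : I -> R) :
  (forall i, P i -> 0 <= F i) -> 0 <= \big[Rmult/1]_(i | P i) F i.
Proof.
move=> H; apply: (big_ind (fun x => 0 <= x)); [lra| move=> *; nra | exact H].
Qed.

Lemma Rprod_le (I : finType) (P : pred I) (F G : I -> R) :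
  (forall i, P i -> 0 <= F i <= G i) ->
  \big[Rmult/1]_(i | P i) F i <= \big[Rmult/1]_(i | P i) G i.
Proof.
move=> H.
suff: 0 <= \big[Rmult/1]_(i | P i) F i <= \big[Rmult/1]_(i | P i) G i by case.
apply: (big_ind2 (fun x y => 0 <= x <= y)); [lra| move=> *; nra | exact H].
Qed.

Lemma INR_card (T : finType) (A : {pred T}) :
  INR #|A| = \big[Rplus/0]_(x in A) 1.
Proof.
rewrite big_const; elim: #|A| => [|k IH] //=.
rewrite -IH; case: k {IH} => [|k] /=; lra.
Qed.

Lemma INR_card_if (T : finType) (P : pred T) :
  INR #|[set x | P x]| = \big[Rplus/0]_x (if P x then 1 else 0).
Proof.
rewrite INR_card -big_mkcond; apply: eq_bigl => x; by rewrite inE.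
Qed.

Lemma exp_sum (I : finType) (P : pred I) (F : I -> R) :
  exp (\big[Rplus/0]_(i | P i) F i) = \big[Rmult/1]_(i | P i) exp (F i).
Proof.
apply: (big_morph exp); [by move=> x y; rewrite exp_plus | exact: exp_0].
Qed.

From mathcomp Require Import zify.
Section Comb.
Local Open Scope nat_scope.
Lemma count_pair (C : finType) (l : nat) (c c' : C) : c != c' -> (2 <= l)%N ->
  #|[set S : {set C} | (#|S| == l) && ((c \in S) && (c' \in S))]| = 'C(#|C| - 2, l - 2).
Proof.
move=> Hcc Hl.
set P := [set c; c'].
have cP : #|P| = 2 by rewrite cards2 Hcc.
have cD : #|~: P| = (#|C| - 2)%N by rewrite -(cardsC P) cP addKn.
rewrite -cD -cards_draws.
have -> : [set S : {set C} | (#|S| == l) && ((c \in S) && (c' \in S))] =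
   (fun A => A :|: P) @: [set A : {set C} | A \subset ~: P & #|A| == (l - 2)%N].
  apply/setP => S; rewrite inE; apply/andP/imsetP.
    move=> [/eqP HS /andP[cS c'S]].
    have PS : P \subset S by apply/subsetP => x; rewrite !inE => /orP[]/eqP->.
    exists (S :\: P).
      rewrite inE; apply/andP; split.
        by apply/subsetP => x; rewrite !inE => /andP[].
      by rewrite cardsD (setIidPr PS) cP HS.
    apply/setP => x; rewrite in_setU in_setD.
    case Px: (x \in P); last by rewrite /= orbF.
    by rewrite orbT (subsetP PS x Px).
  move=> [A]; rewrite inE => /andP[AD /eqP cA] ->.
  have dAP : [disjoint A & P] by rewrite -(setCK P) -subsets_disjoint.
  split.
    rewrite cardsU (disjoint_setI0 dAP) cards0 subn0 cA cP subnK //.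
  by rewrite !inE !eqxx !orbT.
rewrite card_in_imset // => A B; rewrite !inE => /andP[AD _] /andP[BD _] E.
have dAP : [disjoint A & P] by rewrite -(setCK P) -subsets_disjoint.
have dBP : [disjoint B & P] by rewrite -(setCK P) -subsets_disjoint.
have fA : (A :|: P) :\: P = A by rewrite setDUl setDv setU0; apply/setDidPl.
have fB : (B :|: P) :\: P = B by rewrite setDUl setDv setU0; apply/setDidPl.
by rewrite -fA E fB.
Qed.

Lemma binrel m l : (2 <= l)%N -> (l <= m)%N ->
  (m * (m - 1) * 'C(m - 2, l - 2) = l * (l - 1) * 'C(m, l))%N.
Proof.
move=> Hl Hlm.
case: m Hlm => [|[|M]] //; first by move=> H; lia.
  by move=> H; lia.
case: l Hl => [|[|L]] // _ HLM.
rewrite !subn2 /= !subn1 /=.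
have e1 := mul_bin_diag M.+2 L.+1.
have e2 := mul_bin_diag M.+1 L.
rewrite /= in e1 e2.
rewrite -mulnA e2 mulnCA e1; lia.
Qed.

Lemma pbound m l K N : (2 <= l)%N -> (l <= m)%N ->
  (m * (m - 1) * K = l * (l - 1) * N)%N -> (l ^ 2 * N <= 2 * m ^ 2 * K)%N.
Proof.
move=> Hl Hlm H.
have Hl1 : (0 < l - 1)%N by lia.
rewrite -(leq_pmul2l Hl1).
have e : ((l - 1) * (l ^ 2 * N) = (l * (m - 1)) * (m * K))%N.
  have -> : ((l - 1) * (l ^ 2 * N) = l * (l * (l - 1) * N))%N by rewrite expnS expn1; lia.
  rewrite -H; lia.
rewrite e.
have e2 : ((l - 1) * (2 * m ^ 2 * K) = (2 * m * (l - 1)) * (m * K))%N by rewrite expnS expn1; lia.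
rewrite e2 leq_mul2r; apply/orP; right.
nia.
Qed.

Lemma pbound' m l K N : (2 <= l)%N -> (l <= m)%N ->
  (m * (m - 1) * K = l * (l - 1) * N)%N -> (l * l * N <= 2 * (m * m) * K)%N.
Proof. move=> h1 h2 h3; have := pbound h1 h2 h3; rewrite !expnS !expn0 !muln1; lia. Qed.
End Comb.

Section Main.
Variables (C : finType) (n l : nat) (pref : 'I_n -> rel C).

Definition QL (S : {set C}) : bool := #|S| == l.

Lemma distr (h : 'I_n -> {set C} -> R) :
  \big[Rplus/0]_(w in Omega C n l) \big[Rmult/1]_v h v (w v)
  = \big[Rmult/1]_v \big[Rplus/0]_(S | QL S) h v S.
Proof.
rewrite bigA_distr_big; apply: eq_bigl => w.
rewrite /Omega inE; apply/forallP/ffun_onP => H v; have := H v; by rewrite /QL.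
Qed.

Definition NL : R := \big[Rplus/0]_(S | QL S) 1.

Lemma card_Omega : INR #|Omega C n l| = \big[Rmult/1]_(v : 'I_n) NL.
Proof.
rewrite INR_card -distr; apply: eq_bigr => w _.
by rewrite big1_eq.
Qed.

Variable c : C.

Definition P2 (c' : C) (S : {set C}) : bool := (c \in S) && (c' \in S).
Definition N2 (c' : C) : R := \big[Rplus/0]_(S | QL S && P2 c' S) 1.

Lemma voter_sum (k : R) c' :
  \big[Rplus/0]_(S | QL S) exp (if P2 c' S then k else 0) = NL + N2 c' * (exp k - 1).
Proof.
rewrite /NL /N2 (bigID (P2 c')) /= [in RHS](bigID (P2 c')) /=.
rewrite (eq_bigr (fun _ => exp k)); last by move=> S /andP[_ ->].
rewrite [in X in _ + X = _](eq_bigr (fun _ => 1)); last by move=> S /andP[_ /negbTE ->]; rewrite exp_0.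
rewrite (eq_bigr (fun _ => exp k * 1) (P := fun S => QL S && P2 c' S)); last by move=> *; lra.
rewrite -big_distrr /=. lra.
Qed.


Definition kv c' k1 k2 (v : 'I_n) : R := if pref v c c' then k1 else k2.
Definition gZ c' k1 k2 v S : R := if P2 c' S then kv c' k1 k2 v else 0.
Definition Zs c' k1 k2 (w : outcome C n) : R := \big[Rplus/0]_v gZ c' k1 k2 v (w v).
Definition pp c' : R := N2 c' / NL.
Definition Bset c' := #|[set v | ~~ pref v c c']|.

Lemma sum_if (P : pred 'I_n) (z1 z2 : R) :
  \big[Rplus/0]_v (if P v then z1 else z2) =
  INR #|[set v | P v]| * z1 + INR #|[set v | ~~ P v]| * z2.
Proof.
rewrite (bigID P) /=.
rewrite (eq_bigr (fun _ => z1 * 1)); last by move=> v ->; lra.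
rewrite [X in _ + X = _](eq_bigr (fun _ => z2 * 1)); last by move=> v /negbTE ->; lra.
rewrite -!big_distrr /= !INR_card (Rmult_comm z1) (Rmult_comm z2).
congr (_ * _ + _ * _); apply: eq_bigl => v; by rewrite inE.
Qed.

Lemma NL_ge0 : 0 <= NL.
Proof. apply: Rsum_ge0 => *; lra. Qed.

Lemma chernoff c' k1 k2 lam : 0 < NL ->
  \big[Rplus/0]_(w in Omega C n l) exp (lam * Zs c' k1 k2 w) <=
  INR #|Omega C n l| * exp (pp c' * (INR (scMM2 pref c c') * (exp (lam*k1) - 1)
                                     + INR (Bset c') * (exp (lam*k2) - 1))).
Proof.
move=> HNL.
rewrite (eq_bigr (fun w : outcome C n => \big[Rmult/1]_v exp (lam * gZ c' k1 k2 v (w v)))); last first.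
  by move=> w _; rewrite /Zs big_distrr exp_sum.
rewrite (distr (fun v S => exp (lam * gZ c' k1 k2 v S))) card_Omega.
have -> : pp c' * (INR (scMM2 pref c c') * (exp (lam * k1) - 1) + INR (Bset c') * (exp (lam * k2) - 1))
  = \big[Rplus/0]_v (pp c' * (exp (lam * kv c' k1 k2 v) - 1)).
  rewrite -big_distrr /=; congr (_ * _).
  rewrite (eq_bigr (fun v => if pref v c c' then exp (lam*k1) - 1 else exp (lam*k2) - 1)); last first.
    by move=> v _; rewrite /kv; case: (pref v c c').
  by rewrite sum_if /scMM2 /Bset.
rewrite exp_sum -big_split /=.
apply: Rprod_le => v _.
rewrite (eq_bigr (fun S => exp (if P2 c' S then lam * kv c' k1 k2 v else 0))); last first.
  by move=> S _; rewrite /gZ; case: (P2 c' S) => //; rewrite Rmult_0_r.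
split.
  apply: Rsum_ge0 => *; apply: Rlt_le; apply: exp_pos.
rewrite voter_sum.
have := exp_ineq1_le (pp c' * (exp (lam * kv c' k1 k2 v) - 1)).
rewrite /pp => H.
have -> : NL + N2 c' * (exp (lam * kv c' k1 k2 v) - 1) = NL * (1 + N2 c' / NL * (exp (lam * kv c' k1 k2 v) - 1)).
  by field; lra.
apply: Rmult_le_compat_l; lra.
Qed.


Lemma bigmin_le (I : eqType) (r : seq I) (P : pred I) (F : I -> nat) x j :
  j \in r -> P j -> (\big[minn/x]_(i <- r | P i) F i <= F j)%N.
Proof.
elim: r => // i r IH; rewrite in_cons big_cons; case/orP => [/eqP <- | jr] Pj.
  by rewrite Pj geq_minl.
by case: (P i); rewrite ?geq_min IH ?orbT.
Qed.

Lemma NL_eq : NL = INR 'C(#|C|, l).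
Proof.
rewrite -card_draws INR_card_if /NL big_mkcond /=; apply: eq_bigr => S _.
by rewrite /QL.
Qed.

Lemma N2_eq c' : c != c' -> (2 <= l)%N -> N2 c' = INR 'C(#|C| - 2, l - 2).
Proof.
move=> Hc Hl; rewrite -(count_pair Hc Hl) INR_card_if /N2 big_mkcond /=; apply: eq_bigr => S _.
by rewrite /QL /P2.
Qed.

Lemma NL_gt0 : (l <= #|C|)%N -> 0 < NL.
Proof.
move=> Hlm; rewrite NL_eq; apply: lt_0_INR; apply/ltP; by rewrite bin_gt0.
Qed.

Lemma pp_ge c' : c != c' -> (2 <= l)%N -> (l <= #|C|)%N ->
  INR l ^ 2 / (2 * INR #|C| ^ 2) <= pp c'.
Proof.
move=> Hc Hl Hlm.
have HN := NL_gt0 Hlm.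
have Hm : 0 < INR #|C| by apply: lt_0_INR; apply/ltP; lia.
have h : INR l ^ 2 * NL <= 2 * INR #|C| ^ 2 * N2 c'.
  have e2 : (2:R) = INR 2 by rewrite /=; lra.
  rewrite NL_eq N2_eq // /= !Rmult_1_r e2 -!mult_INR; apply: le_INR; apply/leP.
  apply: pbound' => //; exact: binrel.
rewrite /pp.
replace (N2 c' / NL) with ((2 * INR #|C| ^ 2 * N2 c') / (2 * INR #|C| ^ 2 * NL)) by (field; lra).
replace (INR l ^ 2 / (2 * INR #|C| ^ 2)) with ((INR l ^ 2 * NL) / (2 * INR #|C| ^ 2 * NL)) by (field; lra).
apply: Rmult_le_compat_r => //.
apply: Rlt_le; apply: Rinv_0_lt_compat.
have : 0 < INR #|C| ^ 2 by apply: pow_lt.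
move=> H2; nra.
Qed.

Hypothesis Hpref : forall v, strict_linear_order (pref v).

Lemma lin v x y : x != y -> pref v y x = ~~ pref v x y.
Proof.
move=> Hxy; case: (Hpref v) => irr [tr tot].
have := tot x y Hxy.
case Exy: (pref v x y) => /=; last by [].
move=> _; apply/negP => Eyx.
by have := tr _ _ _ Exy Eyx; rewrite irr.
Qed.

Lemma Zs_eq c' k1 k2 w : c' != c ->
  Zs c' k1 k2 w = k1 * INR (Sc2 pref w c c') + k2 * INR (Sc2 pref w c' c).
Proof.
move=> Hc'.
rewrite /Sc2 !INR_card_if !big_distrr -big_split /=.
apply: eq_bigr => v _.
have Hc : c != c' by rewrite eq_sym.
rewrite /gZ /P2 /kv (lin v Hc).
case: (c \in w v); case: (c' \in w v); case: (pref v c c') => /=; lra.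
Qed.

Lemma Bset_eq c' : c' != c -> Bset c' = scMM2 pref c' c.
Proof.
move=> Hc'; have Hc : c != c' by rewrite eq_sym.
rewrite /Bset /scMM2; apply: eq_card => v; by rewrite !inE (lin v Hc).
Qed.

Lemma AB_sum c' : (scMM2 pref c c' + Bset c')%N = n.
Proof.
rewrite /scMM2 /Bset -[n in RHS]card_ord -(cardsC [set v | pref v c c']).
congr (_ + _)%N; apply: eq_card => v; by rewrite !inE.
Qed.

Lemma scMM_eq cmin : cmin != c ->
  (forall c', c' != c -> (scMM2 pref c cmin <= scMM2 pref c c')%N) ->
  scMM pref c = scMM2 pref c cmin.
Proof.
move=> Hcmin Harg; apply/eqP; rewrite eqn_leq; apply/andP; split.
  by rewrite /scMM; apply: bigmin_le; rewrite ?mem_index_enum.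
rewrite /scMM; elim/big_ind: _.
- by rewrite /scMM2 -[X in (_ <= X)%N]card_ord max_card.
- by move=> x y Hx Hy; rewrite leq_min Hx Hy.
- by move=> i Hi; apply: Harg.
Qed.


Definition qual w c' := (c' != c) && (0 < Sc2 pref w c c' + Sc2 pref w c' c)%N.
Definition rat w c' := INR (Sc2 pref w c c') / INR (Sc2 pref w c c' + Sc2 pref w c' c).

Definition Fs w := (fun c' acc =>
           if (c' != c) && (0 < Sc2 pref w c c' + Sc2 pref w c' c)%N then
             let r := (INR (Sc2 pref w c c') / INR (Sc2 pref w c c' + Sc2 pref w c' c)) in
             Some (match acc with None => r | Some a => Rmin r a end)
           else acc).

Lemma fold_spec w (s : seq C) :
  match foldr (Fs w) None s with
  | None => forall c', c' \in s -> ~~ qual w c'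
  | Some r => (exists c', qual w c' /\ r = rat w c') /\
              (forall c', c' \in s -> qual w c' -> r <= rat w c')
  end.
Proof.
elim: s => [|x s IH] //=.
rewrite {1}/Fs -/(qual w x) -/(rat w x).
case Hq: (qual w x).
  move: IH; case: (foldr (Fs w) None s) => [a|] IH /=; split.
  - apply: (Rmin_case (rat w x) a (fun r => exists c', qual w c' /\ r = rat w c')); first by exists x.
    by case: IH => [[y [Hy ->]] _]; exists y.
  - move=> c'; rewrite in_cons => /orP[/eqP -> _|Hs Hq'].
      exact: Rmin_l.
    case: IH => _ H; apply: Rle_trans (H c' Hs Hq'); exact: Rmin_r.
  - by exists x.
  - move=> c'; rewrite in_cons => /orP[/eqP -> _|Hs Hq'].
      exact: Rle_refl.
    by have := IH c' Hs; rewrite Hq'.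
move: IH; case: (foldr (Fs w) None s) => [a|] IH /=.
  split; first by case: IH.
  move=> c'; rewrite in_cons => /orP[/eqP -> |Hs Hq']; first by rewrite Hq.
  by case: IH => _ H; apply: H.
move=> c'; rewrite in_cons => /orP[/eqP -> |Hs]; first by rewrite Hq.
exact: IH.
Qed.

Lemma Smin_spec w :
  match Smin pref w c with
  | None => forall c', ~~ qual w c'
  | Some r => (exists c', qual w c' /\ r = rat w c') /\
              (forall c', qual w c' -> r <= rat w c')
  end.
Proof.
have := fold_spec w (enum C).
rewrite /Smin -/(Fs w).
case: (foldr (Fs w) None (enum C)) => [r [H1 H2]|H].
  split => // c' Hq; apply: H2 => //; by rewrite mem_enum.
move=> c'; apply: H; by rewrite mem_enum.
Qed.


Definition Aj j : R := INR (scMM2 pref c j).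
Definition Bj j : R := INR n - Aj j.

Definition Zj eps cmin j w : R :=
  if j == c then Zs cmin (Bj cmin - eps * Aj cmin) (- (1 + eps) * Aj cmin) w
  else Zs j (- (Bj j + eps * Aj j)) ((1 - eps) * Aj j) w.

Lemma nqual0 w c' : c' != c -> ~~ qual w c' ->
  Sc2 pref w c c' = 0%N /\ Sc2 pref w c' c = 0%N.
Proof.
rewrite /qual => -> /=; rewrite -leqNgt leqn0 addn_eq0 => /andP[/eqP -> /eqP ->]; by [].
Qed.

Lemma event eps cmin w : 0 < eps <= 1 -> cmin != c ->
  (forall c', c' != c -> (scMM2 pref c cmin <= scMM2 pref c c')%N) ->
  deviates pref eps w c -> exists j, 0 <= Zj eps cmin j w.
Proof.
move=> He Hcmin Harg.
have HS := scMM_eq Hcmin Harg.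
rewrite /deviates /Sc; have := Smin_spec w.
case: (Smin pref w c) => [r [[c1 [Hq1 Hr]] Hall] | Hnone] /=; last first.
  move=> _; exists c; rewrite /Zj eqxx Zs_eq //.
  have [-> ->] := nqual0 Hcmin (Hnone cmin); rewrite /=; lra.
case: (Rlt_dec _ _) => [H1 _ | _ /=].
  move: (Hq1); rewrite /qual => /andP[Hc1 HT].
  exists c1; rewrite /Zj (negbTE Hc1) Zs_eq //.
  move: Hr; rewrite /rat plus_INR => Hr.
  have HT' : 0 < INR (Sc2 pref w c c1) + INR (Sc2 pref w c1 c).
    rewrite -plus_INR; apply: lt_0_INR; exact/ltP.
  have HA : INR (scMM pref c) <= Aj c1 by rewrite /Aj; apply: le_INR; apply/leP; rewrite HS; exact: Harg.
  set X := INR (Sc2 pref w c c1) in Hr HT' *; set Y := INR (Sc2 pref w c1 c) in Hr HT' *.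
  have H2 : INR n * r < (1 - eps) * Aj c1.
    apply: Rlt_le_trans H1 _; apply: Rmult_le_compat_l; lra.
  have H3 : INR n * X < (1 - eps) * Aj c1 * (X + Y).
    rewrite Hr in H2.
    have := Rmult_lt_compat_r (X + Y) _ _ HT' H2.
    have -> : INR n * (X / (X + Y)) * (X + Y) = INR n * X by field; lra.
    by [].
  rewrite /Bj; nra.
case: (Rlt_dec _ _) => [H1 _|] //.
exists c; rewrite /Zj eqxx Zs_eq //.
case Hq: (qual w cmin); last first.
  have [-> ->] := nqual0 Hcmin (negbT Hq); rewrite /=; lra.
have Hr2 := Hall cmin Hq.
move: (Hq); rewrite /qual => /andP[_ HT].
move: Hr2; rewrite /rat plus_INR => Hr2.
have HT' : 0 < INR (Sc2 pref w c cmin) + INR (Sc2 pref w cmin c).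
  rewrite -plus_INR; apply: lt_0_INR; exact/ltP.
rewrite HS in H1.
set X := INR (Sc2 pref w c cmin) in Hr2 HT' *; set Y := INR (Sc2 pref w cmin c) in Hr2 HT' *.
have Hn : 0 <= INR n by apply: pos_INR.
have H2 : (1 + eps) * Aj cmin < INR n * (X / (X + Y)).
  apply: Rlt_le_trans H1 _; apply: Rmult_le_compat_l => //.
have H3 : (1 + eps) * Aj cmin * (X + Y) < INR n * X.
  have := Rmult_lt_compat_r (X + Y) _ _ HT' H2.
  have -> : INR n * (X / (X + Y)) * (X + Y) = INR n * X by field; lra.
  by [].
rewrite /Bj; nra.
Qed.


Lemma Om_gt0 : (l <= #|C|)%N -> 0 < INR #|Omega C n l|.
Proof.
move=> Hlm; rewrite card_Omega; have HN := NL_gt0 Hlm.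
apply: (big_ind (fun x => 0 < x)); [lra | move=> x y Hx Hy; nra | by []].
Qed.

Lemma exp_mono x y : x <= y -> exp x <= exp y.
Proof. move=> H; case: (Rle_lt_or_eq_dec _ _ H) => [H'|->]; [apply: Rlt_le; exact: exp_increasing | lra]. Qed.

Lemma main_bound eps cmin : 0 < eps <= 1 -> cmin != c ->
  (forall c', c' != c -> (scMM2 pref c cmin <= scMM2 pref c c')%N) ->
  (2 <= l)%N -> (l <= #|C|)%N -> (2 <= #|C|)%N ->
  prob_deviates pref l eps c <=
     INR #|C| * exp (- (eps ^ 2 * INR l ^ 2 * INR (scMM2 pref c cmin))
                      / (6 * INR #|C| ^ 2)).
Proof.
move=> He Hcmin Harg Hl Hlm Hm.
have HOm := Om_gt0 Hlm.
have Hm' : 2 <= INR #|C| by have := le_INR _ _ (elimT leP Hm); rewrite /=; lra.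
set D := [set w in Omega C n l | deviates pref eps w c].
have HDle : INR #|D| <= INR #|Omega C n l|.
  apply: le_INR; apply/leP; apply: subset_leq_card; apply/subsetP => w; rewrite inE => /andP[].
  by [].
rewrite /prob_deviates -/D.
set S := scMM2 pref c cmin.
case: (posnP S) => HS.
  have -> : - (eps ^ 2 * INR l ^ 2 * INR S) / (6 * INR #|C| ^ 2) = 0.
    rewrite HS /=; rewrite /Rdiv !Rmult_0_r Ropp_0; apply: Rmult_0_l.
  rewrite exp_0 Rmult_1_r.
  apply: (Rle_trans _ 1).
    apply: (Rmult_le_reg_r (INR #|Omega C n l|)) => //.
    rewrite Rmult_assoc Rinv_l; lra.
  lra.
have HSn : (S <= n)%N by rewrite /S /scMM2 -[X in (_ <= X)%N]card_ord max_card.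
have Hn : 0 < INR n by apply: lt_0_INR; apply/ltP; lia.
set m := INR #|C|.
set K := - (eps ^ 2 * INR l ^ 2 * INR S) / (6 * m ^ 2).
set lam := 2 * eps / (3 * INR n).
have Hlam : 0 <= lam by rewrite /lam; apply: Rlt_le; apply: Rdiv_lt_0_compat; lra.
have St1 : INR #|D| <= \big[Rplus/0]_(w in Omega C n l) \big[Rplus/0]_(j : C) exp (lam * Zj eps cmin j w).
  rewrite INR_card.
  rewrite (eq_bigl (fun w => (w \in Omega C n l) && deviates pref eps w c)); last by move=> w; rewrite inE.
  rewrite big_mkcondr /=.
  apply: Rsum_le => w _.
  case Hd: (deviates pref eps w c); last by apply: Rsum_ge0 => *; apply: Rlt_le; apply: exp_pos.
  have [j Hj] := event He Hcmin Harg Hd.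
  rewrite (bigD1 j) //=.
  have : 0 <= \big[Rplus/0]_(i | i != j) exp (lam * Zj eps cmin i w).
    by apply: Rsum_ge0 => *; apply: Rlt_le; apply: exp_pos.
  have := exp_ineq1_le (lam * Zj eps cmin j w).
  have : 0 <= lam * Zj eps cmin j w by apply: Rmult_le_pos.
  lra.
rewrite exchange_big /= in St1.
have HppK : forall j, j != c -> forall f, f <= -(eps^2 * INR S)/3 -> pp j * f <= K.
  move=> j Hj f Hf.
  have Hc : c != j by rewrite eq_sym.
  have Hp := pp_ge Hc Hl Hlm.
  have Hm2 : 0 < m ^ 2 by apply: pow_lt; rewrite /m; lra.
  have Hl0 : 0 <= INR l ^ 2 by apply: pow_le; apply: pos_INR.
  have HS0 : 0 <= INR S by apply: pos_INR.
  have Hes : 0 <= eps ^ 2 * INR S by apply: Rmult_le_pos => //; apply: pow_le; lra.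
  have Hf0 : f <= 0 by lra.
  apply: (Rle_trans _ (INR l ^ 2 / (2 * m ^ 2) * f)).
    rewrite /m; nra.
  apply: (Rle_trans _ (INR l ^ 2 / (2 * m ^ 2) * (-(eps^2 * INR S)/3))).
    apply: Rmult_le_compat_l => //; rewrite /Rdiv; apply: Rmult_le_pos => //; apply: Rlt_le; apply: Rinv_0_lt_compat; lra.
  rewrite /K /m; apply: Req_le; field; lra.
have St3 : forall j, \big[Rplus/0]_(w in Omega C n l) exp (lam * Zj eps cmin j w) <=
                     INR #|Omega C n l| * exp K.
  move=> j.
  have HNL := NL_gt0 Hlm.
  have HAB : forall j', Aj j' + Bj j' = INR n by move=> j'; rewrite /Bj; lra.
  have HBs : forall j', INR (Bset j') = Bj j'.
    move=> j'; have := f_equal INR (AB_sum j'); rewrite plus_INR /Bj /Aj; lra.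
  have HA0 : forall j', 0 <= Aj j' by move=> j'; apply: pos_INR.
  have HB0 : forall j', 0 <= Bj j' by move=> j'; rewrite -HBs; apply: pos_INR.
  rewrite /Zj; case: eqP => [_|/eqP Hj].
    apply: (Rle_trans _ _ _ (chernoff _ _ _ _ HNL)).
    apply: Rmult_le_compat_l; first lra.
    apply: exp_mono; apply: HppK => //.
    rewrite HBs.
    have := @anU (Aj cmin) (Bj cmin) eps (HA0 cmin) (HB0 cmin) He; rewrite HAB => /(_ Hn).
    by rewrite /Aj /lam.
  apply: (Rle_trans _ _ _ (chernoff _ _ _ _ HNL)).
  apply: Rmult_le_compat_l; first lra.
  apply: exp_mono; apply: HppK => //.
  rewrite HBs.
  have := @anL (Aj j) (Bj j) eps (HA0 j) (HB0 j) He; rewrite HAB => /(_ Hn).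
  have HSA : INR S <= Aj j by rewrite /Aj; apply: le_INR; apply/leP; exact: Harg.
  rewrite /Aj /lam => H.
  apply: (Rle_trans _ _ _ H).
  have : 0 < eps ^ 2 by apply: pow_lt; lra.
  rewrite /Aj in HSA; nra.
have St4 : \big[Rplus/0]_(j : C) \big[Rplus/0]_(w in Omega C n l) exp (lam * Zj eps cmin j w)
           <= m * (INR #|Omega C n l| * exp K).
  apply: (Rle_trans _ (\big[Rplus/0]_(j : C) (INR #|Omega C n l| * exp K))).
    by apply: Rsum_le => j _; apply: St3.
  rewrite (eq_bigr (fun _ => (INR #|Omega C n l| * exp K) * 1)); last by move=> *; lra.
  rewrite -big_distrr /=.
  have -> : \big[Rplus/0]_(j : C) 1 = m by rewrite /m INR_card; apply: eq_bigl.
  rewrite Rmult_comm; apply: Rle_refl.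
have Hfin : INR #|D| <= m * (INR #|Omega C n l| * exp K) by apply: Rle_trans St1 St4.
apply: (Rmult_le_reg_r (INR #|Omega C n l|)) => //.
rewrite /Rdiv Rmult_assoc Rinv_l; last lra.
lra.
Qed.

End Main.

Theorem theorem3 (C : finType) (n l : nat) (pref : 'I_n -> rel C)
  (Hpref : forall v, strict_linear_order (pref v))
  (Hm : (2 <= #|C|)%N) (Hl2 : (2 <= l)%N) (Hlm : (l <= #|C|)%N)
  (c cmin : C) (Hcmin : cmin != c)
  (Hargmin : forall c', c' != c -> (scMM2 pref c cmin <= scMM2 pref c c')%N)
  (eps : R) (Heps : 0 < eps <= 1) :
  prob_deviates pref l eps c <=
     INR #|C| * exp (- (eps ^ 2 * INR l ^ 2 * INR (scMM2 pref c cmin))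
                      / (6 * INR #|C| ^ 2)).
Proof.
exact: (main_bound Hpref Heps Hcmin Hargmin Hl2 Hlm Hm).
Qed.
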